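(* Let $G=(\mathcal{S},\mathbb{A})$ be a finite directed acyclic graph with a unique initial state $s_0\in\mathcal{S}$ having no incoming edges, such that every state is reachable from $s_0$. Let $\mathcal{X}\subset\mathcal{S}$ be the set of terminal states (states with no outgoing edges), and assume $\mathcal{X}\neq\emptyset$. Let $\mathcal{E}:\mathcal{S}\to\mathbb{R}$ be an energy function defined on all states, and for an edge $(s\to s')\in\mathbb{A}$ put $\mathcal{E}(s\to s')=\mathcal{E}(s')-\mathcal{E}(s)$. The reward of a terminal state $x$ is $R(x)=e^{-\mathcal{E}(x)}$. Let $P_F$ be a forward policy, i.e. for each nonterminal $s$ a probability distribution $P_F(\cdot\mid s)$ on the children of $s$; let $P_B$ be a backward policy, i.e. for each $s'\neq s_0$ a probability distribution $P_B(\cdot\mid s')$ on the parents of $s'$; and let $\widetilde F:\mathcal{S}\to(0,\infty)$ (the forward-looking flow) satisfy $\widetilde F(x)=1$ for every $x\in\mathcal{X}$. Suppose that for every edge $(s\to s')\in\mathbb{A}$ the FL-DB loss $$\mathcal{L}(s,s')=\Big(\log\widetilde F(s)+\log P_F(s'\mid s)-\log\widetilde F(s')-\log P_B(s\mid s')+\mathcal{E}(s\to s')\Big)^2$$ vanishes, i.e. $\widetilde F(s)P_F(s'\mid s)=\widetilde F(s')P_B(s\mid s')e^{-\mathcal{E}(s\to s')}$. Then $P_F$ samples terminal states proportionally to the reward: for every $x\in\mathcal{X}$, $$P_F^\top(x)=\frac{e^{-\mathcal{E}(x)}}{\sum_{y\in\mathcal{X}}e^{-\mathcal{E}(y)}},$$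 where $P_F^\top(x)=\sum_{\tau=(s_0\to s_1\to\cdots\to s_n=x)}\prod_{i=1}^n P_F(s_i\mid s_{i-1})$ is the probability that a trajectory started at $s_0$ and following $P_F$ until reaching a terminal state ends at $x$ (the sum is over all complete trajectories, i.e. directed paths in $G$ from $s_0$ to $x$).
   Context: This is the correctness statement for ''forward-looking GFlowNets''. The forward-looking flow $\widetilde F$ is intended to represent $e^{\mathcal{E}(s)}F(s)$, where $F$ is an ordinary GFlowNet state flow; at terminal states the ordinary flow equals the reward $e^{-\mathcal{E}(x)}$, which corresponds to the normalization $\widetilde F(x)=1$ for $x\in\mathcal{X}$. *)

(* Defs.v *)
From HB Require Import structures.
From mathcomp Require Import all_boot all_order all_algebra.
From mathcomp Require Import reals sequences exp.
Set Implicit Arguments. Unset Strict Implicit. Unset Printing Implicit Defensive.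
Import Order.TTheory GRing.Theory Num.Theory.
Local Open Scope ring_scope.

Definition terminal (S : finType) (e : rel S) (s : S) : bool :=
  [forall s' : S, ~~ e s s'].

Definition acyclic (S : finType) (e : rel S) : Prop :=
  forall (s : S) (p : seq S), p != [::] -> path e s p -> last s p != s.

(* product of policy weights along a trajectory s -> t_1 -> ... -> t_n;
   PF s s' stands for P_F(s' | s). *)
Fixpoint traj_weight (R : realType) (S : finType) (PF : S -> S -> R)
    (s : S) (t : seq S) : R :=
  match t with
  | [::] => 1
  | s' :: t' => PF s s' * traj_weight PF s' t'
  end.

(* A path is encoded by
   the tuple (s1,...,sn) of its states after s0.  In a DAG every directed path
   has at most #|S| - 1 edges, so n ranges over n < #|S|. *)
Definition PF_top (R : realType) (S : finType) (e : rel S) (PF : S -> S -> R)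
    (s0 x : S) : R :=
  \sum_(n < #|S|) \sum_(t : n.-tuple S | path e s0 t && (last s0 t == x))
     traj_weight PF s0 t.

(* Main.v *)
Require Import Defs.
From HB Require Import structures.
From mathcomp Require Import all_boot all_order all_algebra.
From mathcomp Require Import reals sequences exp.
From mathcomp Require Import ring.
Import Order.TTheory GRing.Theory Num.Theory.
Local Open Scope ring_scope.

Section Helpers.
Variables (R : realType) (S : finType).

Definition Aw (M : S -> S -> R) (n : nat) (s x : S) : R :=
  \sum_(t : n.-tuple S | last s t == x) traj_weight M s t.

Lemma Aw0 M s x : Aw M 0 s x = (s == x)%:R.
Proof.
rewrite /Aw big_mkcond (big_pred1 [tuple]) /=; last first.
  by move=> t; apply/esym/eqP/tuple0.
by case: eqP.
Qed.

Lemma AwS M n s x : Aw M n.+1 s x = \sum_(s' : S) M s s' * Aw M n s' x.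
Proof.
rewrite /Aw.
under [RHS]eq_bigr do rewrite mulr_sumr.
rewrite pair_big_dep /=.
rewrite (reindex (fun p : S * n.-tuple S => [tuple of p.1 :: p.2])) /=.
  by apply: eq_bigr => -[a t] /=.
exists (fun t : n.+1.-tuple S => (thead t, [tuple of behead t])) => //.
  by move=> [a t] _ /=; congr pair; apply: val_inj.
by move=> t _ /=; rewrite [in RHS](tuple_eta t).
Qed.

Lemma AwSr M n s x : Aw M n.+1 s x = \sum_(u : S) Aw M n s u * M u x.
Proof.
elim: n s => [|n IH] s.
  rewrite AwS.
  under eq_bigr do rewrite Aw0.
  under [RHS]eq_bigr do rewrite Aw0.
  rewrite (bigD1 x) //= eqxx mulr1 big1 ?addr0; last first.
    by move=> i /negbTE ->; rewrite mulr0.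
  rewrite (bigD1 s) //= eqxx mul1r big1 ?addr0 //.
  by move=> i; rewrite eq_sym => /negbTE ->; rewrite mul0r.
rewrite AwS.
under eq_bigr do rewrite IH mulr_sumr.
rewrite exchange_big /=; apply: eq_bigr => u _.
by rewrite AwS mulr_suml; apply: eq_bigr => i _; rewrite mulrA.
Qed.

Lemma w_nopath (e : rel S) (M : S -> S -> R) s t :
  (forall u v, ~~ e u v -> M u v = 0) -> ~~ path e s t -> traj_weight M s t = 0.
Proof.
move=> HM; elim: t s => [|y t IH] s //=.
case: (boolP (e s y)) => /= Hy Hp.
  by rewrite IH // mulr0.
by rewrite HM // mul0r.
Qed.

Lemma acyc_uniq (e : rel S) (s : S) (t : seq S) (Hac : acyclic e) : path e s t -> uniq (s :: t).
Proof.
elim: t s => [|y t IH] s //= /andP [Hsy Hp].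
have := IH y Hp => /= /andP [-> ->]; rewrite !andbT.
apply/negP => Hs.
have Hs' : s \in y :: t by [].
have Hpt : path e s (y :: t) by rewrite /= Hsy.
move: Hpt; case/path.splitP: Hs' => p1 p2.
rewrite cat_path => /andP [Hc _].
have := Hac s (rcons p1 s); rewrite last_rcons eqxx => /(_ _ Hc).
move=> H; suff: false by []; apply: H; by rewrite -size_eq0 size_rcons.
Qed.


Lemma Aw_nil (e : rel S) (M : S -> S -> R) n s x : acyclic e ->
  (forall u v, ~~ e u v -> M u v = 0) -> (#|S| <= n)%N -> Aw M n s x = 0.
Proof.
move=> Hac HM Hn; apply: big1 => t _.
case: (boolP (path e s t)) => Hp; last exact: w_nopath Hp.
have := acyc_uniq _ _ _ Hac Hp => /card_uniqP Hc.
have := max_card (mem (s :: val t)); rewrite Hc /= size_tuple => Hle.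
by have := leq_trans Hle Hn; rewrite ltnn.
Qed.

Lemma acyc_rev (e : rel S) : acyclic e -> acyclic [rel u v | e v u].
Proof.
move=> Hac s p Hp0 Hp; apply/negP => /eqP Hl.
have : path e (last s p) (rev (belast s p)) by rewrite rev_path.
rewrite Hl => Hp'.
have := Hac s _ _ Hp'.
case: p Hp0 {Hp Hl Hp'} => //= y p _.
rewrite rev_cons last_rcons eqxx => H; suff: false by []; apply: H; by rewrite -size_eq0 size_rcons.
Qed.

Lemma absorb (M : S -> S -> R) (Abs : pred S) s :
  (forall u v, Abs u -> M u v = 0) ->
  (forall u, ~~ Abs u -> \sum_v M u v = 1) ->
  (forall x, Aw M #|S| s x = 0) ->
  \sum_(n < #|S|) \sum_(u | Abs u) Aw M n s u = 1.
Proof.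
move=> Habs Hsum Hnil.
pose T n := \sum_u Aw M n s u.
have HT n : T n = T n.+1 + \sum_(u | Abs u) Aw M n s u.
  rewrite /T; under [X in X + _]eq_bigr do rewrite AwSr.
  rewrite exchange_big /=.
  under [X in _ = X + _]eq_bigr do rewrite -mulr_sumr.
  rewrite [in LHS](bigID Abs) [X in _ = X + _](bigID Abs) /= addrC.
  rewrite [X in _ = X + _]addrC -addrA; congr (_ + _).
    by apply: eq_bigr => u Hu; rewrite Hsum // mulr1.
  rewrite [X in _ = X + _]big1 ?add0r // => u Hu.
  by rewrite big1 ?mulr0 // => v _; rewrite Habs.
have Htel k : \sum_(n < k) \sum_(u | Abs u) Aw M n s u = T 0%N - T k.
  elim: k => [|k IH]; first by rewrite big_ord0 subrr.
  by rewrite big_ord_recr /= IH (HT k); ring.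
rewrite Htel /T [X in _ - X]big1 ?subr0; last by move=> u _; apply: Hnil.
under eq_bigr do rewrite Aw0.
by rewrite (bigD1 s) //= eqxx big1 ?addr0 // => i; rewrite eq_sym => /negbTE ->.
Qed.

End Helpers.
Arguments Aw {R S}.
Arguments Aw0 {R S}.
Arguments AwS {R S}.
Arguments AwSr {R S}.
Arguments w_nopath {R S e M s t}.
Arguments acyc_uniq {S e s t}.
Arguments Aw_nil {R S e M n s x}.
Arguments acyc_rev {S e}.
Arguments absorb {R S M Abs s}.

(* PF s s' = P_F(s' | s);  PB s' s = P_B(s | s');  Ft = forward-looking flow;
   En = energy function. *)
Theorem proposition4p2 (R : realType) (S : finType) (e : rel S) (s0 : S)
    (En : S -> R) (PF PB : S -> S -> R) (Ft : S -> R)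
    (* G is a DAG with initial state s0 (no incoming edges), all states reachable *)
    (Hacyc : acyclic e)
    (Hs0 : forall s : S, ~~ e s s0)
    (Hreach : forall s : S, connect e s0 s)
    (* the set of terminal states is nonempty *)
    (HX : exists x : S, terminal e x)
    (* forward policy: a probability distribution on children of each nonterminal s *)
    (HPF_ge0 : forall s s' : S, 0 <= PF s s')
    (HPF_supp : forall s s' : S, ~~ e s s' -> PF s s' = 0)
    (HPF_sum : forall s : S, ~~ terminal e s -> \sum_(s' : S | e s s') PF s s' = 1)
    (* backward policy: a probability distribution on parents of each s' <> s0 *)
    (HPB_ge0 : forall s' s : S, 0 <= PB s' s)
    (HPB_supp : forall s' s : S, ~~ e s s' -> PB s' s = 0)
    (HPB_sum : forall s' : S, s' != s0 -> \sum_(s : S | e s s') PB s' s = 1)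
    (* forward-looking flow: positive, equal to 1 on terminal states *)
    (HFt_pos : forall s : S, 0 < Ft s)
    (HFt_term : forall x : S, terminal e x -> Ft x = 1)
    (* FL-DB loss vanishes on every edge *)
    (HDB : forall s s' : S, e s s' ->
       Ft s * PF s s' = Ft s' * PB s' s * expR (- (En s' - En s))) :
  forall x : S, terminal e x ->
    PF_top e PF s0 x =
      expR (- En x) / \sum_(y : S | terminal e y) expR (- En y).
Proof.
move=> x Hx.
set N := #|S|.
have Htop : PF_top e PF s0 x = \sum_(n < N) Aw PF n s0 x.
  apply: eq_bigr => n _; rewrite /Aw [RHS]big_mkcond [LHS]big_mkcond.
  apply: eq_bigr => t _; case: (boolP (path e s0 t)) => //= Hp.
  by case: ifP => // _; rewrite (w_nopath HPF_supp Hp).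
pose F u := Ft u * expR (- En u).
have HFpos u : 0 < F u by rewrite mulr_gt0 ?expR_gt0.
have HDBall u y : F u * PF u y = F y * PB y u.
  case: (boolP (e u y)) => Huy; last first.
    by rewrite HPF_supp // HPB_supp // !mulr0.
  rewrite /F mulrAC HDB // -!mulrA -expRD.
  by rewrite [expR (- En y) * _]mulrC; congr (_ * (_ * expR _)); ring.
have Hstep n y : F s0 * Aw PF n s0 y = F y * Aw PB n y s0.
  elim: n y => [|n IH] y.
    by rewrite !Aw0 eq_sym; case: eqP => [->|]; rewrite ?mulr1 ?mulr0.
  rewrite AwSr AwS mulr_sumr mulr_sumr; apply: eq_bigr => u _.
  rewrite mulrA IH.
  by rewrite mulrAC HDBall mulrA.
have HrevAc := acyc_rev Hacyc.
have HB y : \sum_(n < N) Aw PB n y s0 = 1.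
  rewrite -(absorb (M := PB) (s := y) (Abs := pred1 s0)).
  - by apply: eq_bigr => n _; rewrite big_pred1_eq.
  - by move=> u v /eqP ->; rewrite HPB_supp.
  - move=> u Hu; rewrite -(HPB_sum u Hu) [RHS]big_mkcond.
    by apply: eq_bigr => v _; case: ifP => // /negbT /HPB_supp ->.
  - move=> z; apply: (Aw_nil (e := [rel u v | e v u])) => //.
have HP y : F s0 * \sum_(n < N) Aw PF n s0 y = F y.
  by rewrite mulr_sumr; under eq_bigr do rewrite Hstep; rewrite -mulr_sumr HB mulr1.
have HF : \sum_(n < N) \sum_(y | terminal e y) Aw PF n s0 y = 1.
  apply: absorb.
  - by move=> u v /forallP /(_ v) Huv; rewrite HPF_supp.
  - move=> u Hu; rewrite -(HPF_sum u Hu) [RHS]big_mkcond.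
    by apply: eq_bigr => v _; case: ifP => // /negbT /HPF_supp ->.
  - by move=> z; apply: (Aw_nil (e := e)).
have HZ : \sum_(y | terminal e y) expR (- En y) = F s0.
  rewrite exchange_big /= in HF.
  rewrite -[RHS]mulr1 -HF mulr_sumr; apply: eq_bigr => y Hy.
  by rewrite HP /F HFt_term // mul1r.
have H0 : F s0 != 0 by rewrite gt_eqF.
rewrite Htop HZ -{1}(mul1r (expR (- En x))) -(HFt_term x Hx) -/(F x) -(HP x).
by rewrite mulrC mulrA mulVf ?mul1r.
Qed.
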